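(* At any time during the execution of DASH (described in the context) on an initially connected graph, for every surviving node $v$ and every $q\in N(v,G')$, we have $W(T(v,q))\ge \mathrm{rem}(v)$.
   Context: Model: a network is an undirected graph, initially a connected graph $G_0$ on $n$ nodes. In each round an adversary deletes one surviving node $v$ with its incident edges, and then DASH adds edges. $G$ is the current network; $E'$ is the set of healing edges added so far whose endpoints both survive; $G'=(V(G),E')$. $N(u,G)$, $N(u,G')$ are neighbor sets in $G$, $G'$; $\delta(u)=\deg_G(u)-\deg_{G_0}(u)$. DASH: initially every node receives an ID drawn independently and uniformly from $[0,1]$ (its initial ID). When $v$ is deleted (quantities evaluated just before the deletion): partition the nodes of $N(v,G)$ whose current ID differs from that of $v$ into classes of equal current ID; $UN(v,G)$ consists of one node per class, the one with lowest initial ID. Let $S=UN(v,G)\cup N(v,G')$. Order $S$ by increasing $\delta$ and place it in this order into a complete binary tree with $|S|$ positions, filled level by level from the top and left to right; add to the network and to $E'$ the edge between each node of $S$ and the node at its parent position. Then all nodes of the component of $G'$ containing $S$ set their ID to the minimum current ID in $S$. Weights: every node $u$ has weight $w(u)$, initially $1$; when a node $v$ is deleted, $w(v)$ is added to the weight of an arbitrarily chosen node of $N(v,G')$. For a subgraph $H$, $W(H)$ is the sum of the weights of its vertices. For distinct surviving nodes $x,y$, $T(x,y)$ is the connected component of $G'-y$ containing $x$. Define $\mathrm{rem}(v)=\sum_{u\in N(v,G')}W(T(u,v))-\max_{u\in N(v,G')}W(T(u,v))+w(v)$ (the maximum over the empty set being $0$). *)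

(* Defs.v *)
From HB Require Import structures.
From mathcomp Require Import all_boot all_order all_algebra.
From mathcomp Require Import reals.
Set Implicit Arguments. Unset Strict Implicit. Unset Printing Implicit Defensive.
Import Order.TTheory GRing.Theory Num.Theory.

Section DASH.
Variable R : realType.
Variable T : finType.

(* A network state.  Edges are unordered pairs, i.e. 2-element sets. *)
Record state := State {
  alive  : {set T};
  edges  : {set {set T}};
  hedges : {set {set T}};      (* E' : healing edges with both endpoints alive *)
  cid    : T -> R;
  wt     : T -> nat
}.

Definition nbr (E : {set {set T}}) (u : T) : {set T} :=
  [set x | (x != u) && ([set u; x] \in E)].

Definition edges_of (g : rel T) : {set {set T}} :=
  [set e : {set T} | [exists x, exists y, g x y && (e == [set x; y])]].

Definition deg0 (g : rel T) (u : T) : nat := #|[set y | g u y]|.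

Definition delta (g : rel T) (st : state) (u : T) : int :=
  (#|nbr (edges st) u|)%:Z - (deg0 g u)%:Z.

Definition init_state (g : rel T) (id0 : T -> R) : state :=
  State setT (edges_of g) set0 id0 (fun _ => 1%N).

(* UN(v,G): among the neighbours of v whose current ID differs from that of v,
   one per class of equal current ID, the one with lowest initial ID. *)
Definition UN (id0 : T -> R) (st : state) (v : T) : {set T} :=
  [set u in nbr (edges st) v |
     (cid st u != cid st v) &&
     [forall u' in nbr (edges st) v,
        (cid st u' == cid st u) ==> (id0 u <= id0 u')%R]].

(* edges of the complete binary tree obtained by placing s level by level
   (0-indexed position i >= 1 has parent position (i-1)/2) *)
Definition tree_edges (d : T) (s : seq T) : {set {set T}} :=
  [set [set nth d s (val i); nth d s (val i).-1./2] |
     i in [pred i : 'I_(size s) | 0 < val i]].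

(* Nondeterminism: v, the order s of S among equal deltas, the node sm
   realising the minimum ID (the value is determined), the weight recipient. *)
Definition dash_step (g : rel T) (id0 : T -> R) (st st' : state) : Prop :=
  exists v, v \in alive st /\
  let S := UN id0 st v :|: nbr (hedges st) v in
  exists s : seq T,
    [/\ perm_eq s (enum S),
        sorted (fun a b => delta g st a <= delta g st b)%R s,
        alive st' = alive st :\ v,
        edges st' = [set e in edges st | v \notin e] :|: tree_edges v s
      & hedges st' = [set e in hedges st | v \notin e] :|: tree_edges v s] /\
  ((S = set0 /\ cid st' = cid st) \/
   (exists2 sm, sm \in S &
      (forall u, u \in S -> (cid st sm <= cid st u)%R) /\
      cid st' = (fun x =>
        if [exists u in S, connect (fun a b => [set a; b] \in hedges st') u x]
        then cid st sm else cid st x))) /\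
  (* weight transfer to an arbitrary node of N(v,G') (lost if none) *)
  ((nbr (hedges st) v = set0 /\ wt st' = wt st) \/
   (exists2 r, r \in nbr (hedges st) v &
      wt st' = (fun x => if x == r then (wt st x + wt st v)%N else wt st x))).

Inductive reachable (g : rel T) (id0 : T -> R) : state -> Prop :=
  | reach_init : reachable g id0 (init_state g id0)
  | reach_step st st' : reachable g id0 st -> dash_step g id0 st st' ->
                        reachable g id0 st'.

Definition Tcomp (st : state) (x y : T) : {set T} :=
  [set z in alive st |
     connect (fun a b => ([set a; b] \in hedges st) && (y \notin [set a; b])) x z].

Definition Wsum (st : state) (A : {set T}) : nat := \sum_(z in A) wt st z.

Definition remW (st : state) (v : T) : nat :=
  (\sum_(u in nbr (hedges st) v) Wsum st (Tcomp st u v)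
   - \max_(u in nbr (hedges st) v) Wsum st (Tcomp st u v) + wt st v)%N.

End DASH.

(* Main.v *)
Require Import Defs.
From HB Require Import structures.
From mathcomp Require Import all_boot all_order all_algebra.
From mathcomp Require Import reals zify.
Import Order.TTheory GRing.Theory Num.Theory.
Set Implicit Arguments. Unset Strict Implicit.

Section Graph.
Variable T : finType.

Definition rH (H : {set {set T}}) : rel T := fun x y => [set x; y] \in H.
Definition Forest (H : {set {set T}}) :=
  forall a b, a != b -> [set a; b] \in H -> ~~ connect (rH (H :\ [set a; b])) a b.

Lemma cind (e : rel T) (P : T -> Prop) x :
  P x -> (forall a b, P a -> e a b -> P b) -> forall y, connect e x y -> P y.
Proof.
move=> Px step y /connectP [p pth ->]; elim: p x Px pth => //= z p IH x Px.
by move=> /andP[exz pth]; apply: IH (step _ _ Px exz) pth.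
Qed.

Lemma conn_mono (e e' : rel T) x y :
  (forall a b, e a b -> e' a b) -> connect e x y -> connect e' x y.
Proof.
move=> sub; apply: (@cind e (connect e' x) x) => // a b Ca /sub eab.
exact: connect_trans Ca (connect1 eab).
Qed.

Lemma rH_sym H : symmetric (rH H).
Proof. by move=> x y; rewrite /rH setUC. Qed.

Lemma rH_csym H x y : connect (rH H) x y = connect (rH H) y x.
Proof. exact: (sym_connect_sym (rH_sym H)). Qed.

Lemma set2_eq (a b x y : T) : a != b -> [set x; y] = [set a; b] ->
  (x = a /\ y = b) \/ (x = b /\ y = a).
Proof.
move=> ab E.
have xi : x \in [set a; b] by rewrite -E set21.
have yi : y \in [set a; b] by rewrite -E set22.
have ai : a \in [set x; y] by rewrite E set21.
have bi : b \in [set x; y] by rewrite E set22.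
move: xi yi; rewrite !inE.
case/orP => /eqP xe; case/orP => /eqP ye; subst.
- by move: bi; rewrite !inE orbb => /eqP ba; rewrite ba eqxx in ab.
- by left.
- by right.
- by move: ai; rewrite !inE orbb (negbTE ab).
Qed.

Lemma forest_sub (H H' : {set {set T}}) : H' \subset H -> Forest H -> Forest H'.
Proof.
move=> sub fH a b ab inH'; apply/negP => C.
move/negP: (fH a b ab (subsetP sub _ inH')); apply; apply: conn_mono C => x y.
by rewrite /rH !in_setD1 => /andP[-> /(subsetP sub) ->].
Qed.

Lemma forest_add (F : {set {set T}}) a b : Forest F -> a != b -> ~~ connect (rH F) a b ->
  Forest (F :|: [set [set a; b]]).
Proof.
move=> fF ab nab c d cd; rewrite in_setU in_set1 => /orP[cdF | /eqP Ecd].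
- case: (eqVneq [set c; d] [set a; b]) => [Ecd | ne].
    by move/negP: nab; case; apply: connect1; rewrite /rH -Ecd.
  apply/negP => C.
  pose F'' := F :\ [set c; d].
  have subF : forall x y, connect (rH F'') x y -> connect (rH F) x y.
    move=> x y; apply: conn_mono => u w; rewrite /rH in_setD1 => /andP[_ ->] //.
  have cdc : connect (rH F) d c by rewrite rH_csym; apply: connect1.
  pose P z := connect (rH F'') c z \/
     (connect (rH F'') c a /\ connect (rH F) b z) \/
     (connect (rH F'') c b /\ connect (rH F) a z).
  have : P d.
    apply: (@cind (rH ((F :|: [set [set a; b]]) :\ [set c; d])) P c) C; first by left.
    move=> z w Pz; rewrite /rH in_setD1 in_setU in_set1 => /andP[nzw /orP[zwF|/eqP zwab]].
      have e1 : rH F'' z w by rewrite /rH in_setD1 nzw zwF.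
      case: Pz => [Cz|[[C1 C2]|[C1 C2]]].
      + by left; apply: connect_trans Cz (connect1 e1).
      + by right; left; split => //; apply: connect_trans C2 (connect1 _).
      + by right; right; split => //; apply: connect_trans C2 (connect1 _).
    case: (set2_eq ab zwab) => [[zE wE]|[zE wE]]; rewrite zE wE in Pz *.
      case: Pz => [Cz|[[C1 C2]|[C1 C2]]].
      + by right; left.
      + by move/negP: nab; case; rewrite rH_csym.
      + by left.
    case: Pz => [Cz|[[C1 C2]|[C1 C2]]].
    + by right; right.
    + by left.
    + by move/negP: nab.
  case => [Cd|[[C1 C2]|[C1 C2]]].
  + by move/negP: (fF c d cd cdF).
  + move/negP: nab; case; rewrite rH_csym.
    apply: connect_trans C2 _; apply: connect_trans cdc (subF _ _ C1).
  + move/negP: nab; case.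
    apply: connect_trans C2 _; apply: connect_trans cdc (subF _ _ C1).
- apply/negP => C.
  have C' : connect (rH F) c d.
    apply: conn_mono C => x y; rewrite /rH in_setD1 in_setU in_set1 Ecd.
    by case/andP => /negbTE -> ; rewrite orbF.
  case: (set2_eq ab Ecd) C' => [[-> ->]|[-> ->]]; first by move/negP: nab.
  by rewrite rH_csym; move/negP: nab.
Qed.

Lemma nbr_forest (H : {set {set T}}) v u1 u2 : Forest H -> u1 \in nbr H v -> u2 \in nbr H v ->
  u1 != u2 ->
  ~~ connect (fun a b => ([set a; b] \in H) && (v \notin [set a; b])) u1 u2.
Proof.
move=> fH; rewrite !inE => /andP[u1v e1] /andP[u2v e2] u12.
have vu1 : v != u1 by rewrite eq_sym.
apply/negP => C; move/negP: (fH v u1 vu1 e1); apply.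
apply: (connect_trans (y := u2)).
  apply: connect1; rewrite /rH in_setD1 e2 andbT; apply/negP => /eqP E.
  have : u2 \in [set v; u1] by rewrite -E set22.
  by rewrite !inE (negbTE u2v) eq_sym (negbTE u12).
rewrite rH_csym; apply: conn_mono C => x y /andP[inH nv].
rewrite /rH in_setD1 inH andbT; apply/negP => /eqP E.
by move: nv; rewrite E set21.
Qed.

End Graph.

Section Step.
Variables (R : realType) (T : finType) (g : rel T) (id0 : T -> R).
Hypothesis id0_inj : injective id0.

Definition Inv (st : state R T) := Forest (hedges st) /\
  (forall a b, connect (rH (hedges st)) a b -> cid st a = cid st b).

Lemma tree_mem (d : T) s x y : [set x; y] \in tree_edges d s -> x \in s.
Proof.
case/imsetP => i /= i0 E.
have ltm : (val i).-1./2 < size s.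
  apply: leq_ltn_trans (ltn_ord i); apply: leq_trans (leq_pred _).
  by rewrite leq_half_double -addnn; apply: leqW; apply: leq_addr.
have : x \in [set nth d s i; nth d s (val i).-1./2] by rewrite -E set21.
by rewrite !inE => /orP[] /eqP ->; apply: mem_nth.
Qed.

Lemma half_lt k : 0 < k -> k.-1./2 < k.
Proof.
case: k => // k _ /=; rewrite ltnS leq_half_double -addnn.
exact: leqW (leq_addr _ _).
Qed.

Lemma step_inv st st' : Inv st -> dash_step g id0 st st' -> Inv st'.
Proof.
move=> [fH cH] [v [va [s [[ps ss _ _ Eh] [Hcid _]]]]].
set S := UN id0 st v :|: nbr (hedges st) v in ps Hcid *.
pose H := hedges st.
pose H0 := [set e in H | v \notin e].
have memS : forall x, (x \in s) = (x \in S) by move=> x; rewrite (perm_mem ps) mem_enum.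
have us : uniq s by rewrite (perm_uniq ps) enum_uniq.
have rH0 : forall x y, rH H0 x y = ([set x; y] \in H) && (v \notin [set x; y]).
  by move=> x y; rewrite /rH inE.
have treeS : forall x y, [set x; y] \in tree_edges v s -> x \in S.
  by move=> x y /tree_mem; rewrite memS.
have PD : forall x y, x \in S -> y \in S -> x != y -> ~~ connect (rH H0) x y.
  move=> x y xS yS xy; apply/negP => C.
  have CH : connect (rH H) x y by apply: conn_mono C => a b; rewrite rH0 => /andP[].
  have Cv : connect (fun a b => ([set a; b] \in H) && (v \notin [set a; b])) x y.
    by apply: conn_mono C => a b; rewrite rH0.
  have cxy := cH _ _ CH.
  have cN : forall u, u \in nbr H v -> cid st u = cid st v.
    move=> u; rewrite inE => /andP[_ e]; symmetry; apply: cH; exact: connect1.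
  have cU : forall u, u \in UN id0 st v -> cid st u != cid st v.
    by move=> u; rewrite inE => /andP[_ /andP[]].
  move: xS yS; rewrite !in_setU => /orP[xU|xN] /orP[yU|yN].
  - move: (xU) (yU); rewrite !inE => /andP[xn /andP[_ /forallP Fx]].
    move=> /andP[yn /andP[_ /forallP Fy]].
    move: (Fx y) (Fy x); rewrite !inE yn xn cxy eqxx /= => l1 l2.
    have : id0 x = id0 y by apply/eqP; rewrite eq_le l1 l2.
    by move/id0_inj => E; rewrite E eqxx in xy.
  - by move: (cU _ xU); rewrite cxy (cN _ yN) eqxx.
  - by move: (cU _ yU); rewrite -cxy (cN _ xN) eqxx.
  - by move/negP: (nbr_forest fH xN yN xy).
split.
- pose Ed (i : nat) := [set nth v s i; nth v s i.-1./2].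
  pose tr k := [set e | [exists i : 'I_(size s), (0 < val i < k) && (e == Ed i)]].
  have trE : tree_edges v s = tr (size s).
    apply/setP => e; rewrite inE; apply/imsetP/existsP.
      by move=> [i i0 ->]; exists i; move: i0; rewrite inE => ->; rewrite ltn_ord eqxx.
    by move=> [i /andP[/andP[i0 _] /eqP ->]]; exists i; rewrite ?inE.
  have fH0 : Forest H0.
    by apply: forest_sub fH; apply/subsetP => e; rewrite inE => /andP[].
  have fk : forall k, k <= size s -> Forest (H0 :|: tr k).
    elim => [_|k IH lek].
      apply: forest_sub fH0; apply/subsetP => e; rewrite !inE => /orP[//|].
      by case/existsP => i; rewrite ltn0 andbF.
    case: (posnP k) => [k0|kpos].
      apply: forest_sub fH0; apply/subsetP => e; rewrite !inE => /orP[//|].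
      by case/existsP => i; rewrite k0 ltnS leqn0 => /andP[/andP[/lt0n_neq0 /negbTE ->]].
    have ks : k < size s by [].
    have mk : k.-1./2 < k by apply: half_lt.
    have ms : k.-1./2 < size s by apply: ltn_trans ks.
    apply: (@forest_sub _ ((H0 :|: tr k) :|: [set Ed k])).
      apply/subsetP => e; rewrite !inE => /orP[->//|].
      case/existsP => i /andP[/andP[i0 ik] /eqP ->].
      case: (ltnP i k) => [ilt|ige].
        by apply/orP; left; apply/orP; right; apply/existsP; exists i; rewrite i0 ilt eqxx.
      have -> : val i = k by apply/eqP; rewrite eqn_leq ige -ltnS ik.
      by rewrite eqxx orbT.
    apply: forest_add (IH (ltnW lek)) _ _.
      by rewrite nth_uniq // neq_ltn mk orbT.
    apply/negP => C.
    have sk : nth v s k \in S by rewrite -memS mem_nth.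
    have : connect (rH H0) (nth v s k) (nth v s k.-1./2).
      apply: (@cind _ _ (connect (rH H0) (nth v s k))) C => // z w Pz.
      rewrite /rH in_setU => /orP[zw|].
        by apply: connect_trans Pz (connect1 zw).
      rewrite inE => /existsP [i /andP[/andP[i0 ik] /eqP E]].
      have him : (val i).-1./2 < i by apply: half_lt.
      have : z \in Ed i by rewrite -E set21.
      have isz : i < size s by [].
      rewrite !inE => /orP[] /eqP zE; exfalso.
        have zS : z \in S by rewrite zE -memS mem_nth.
        have nz : nth v s k != z by rewrite zE nth_uniq // neq_ltn ik orbT.
        by move/negP: (PD _ _ sk zS nz).
      have zS : z \in S by rewrite zE -memS mem_nth // (ltn_trans him).
      have nz : nth v s k != z.
        by rewrite zE nth_uniq ?(ltn_trans him) // neq_ltn (ltn_trans him ik) orbT.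
      by move/negP: (PD _ _ sk zS nz).
    apply/negP; apply: PD => //; first by rewrite -memS mem_nth.
    by rewrite nth_uniq // neq_ltn mk orbT.
  by rewrite Eh trE; apply: fk.
- move=> a b C.
  case: Hcid => [[S0 ->]|[sm smS [_ ->]]].
    apply: cH; apply: conn_mono C => x y; rewrite /rH Eh in_setU => /orP[|/treeS].
      by rewrite inE => /andP[].
    by rewrite S0 inE.
  have eqC : [exists u in S, connect (fun a0 b0 => [set a0; b0] \in hedges st') u a] =
             [exists u in S, connect (fun a0 b0 => [set a0; b0] \in hedges st') u b].
    apply/existsP/existsP => [[u /andP[uS Cu]] | [u /andP[uS Cu]]]; exists u.
      by rewrite uS /=; apply: connect_trans Cu C.
    by rewrite uS /=; apply: connect_trans Cu _; rewrite rH_csym.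
  rewrite /= eqC; case: ifP => // nC.
  apply: cH.
  have : connect (rH H) a b /\ connect (rH (hedges st')) a b.
    apply: (@cind _ _ (fun z => connect (rH H) a z /\ connect (rH (hedges st')) a z)) (C) => //.
    move=> z w [Pz Pz'] zw; split; last by apply: connect_trans Pz' (connect1 zw).
    move: (zw); rewrite /rH Eh in_setU => /orP[|/treeS zS].
      by rewrite inE => /andP[zwH _]; apply: connect_trans Pz (connect1 zwH).
    move/negbT/negP: nC; case; apply/existsP; exists z; rewrite zS /=.
    by apply: connect_trans C; rewrite rH_csym.
  by case.
Qed.

End Step.

Lemma final (R : realType) (T : finType) (st : state R T) v q :
  Forest (hedges st) -> v \in alive st -> q \in nbr (hedges st) v ->
  (remW st v <= Wsum st (Tcomp st v q))%N.
Proof.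
move=> fH va qN.
pose H := hedges st.
pose N := nbr H v.
pose Tc u := Tcomp st u v.
pose Rv := fun a b : T => ([set a; b] \in H) && (v \notin [set a; b]).
have RvS : symmetric Rv by move=> x y; rewrite /Rv setUC.
have nN : forall u, u \in N -> u != v by move=> u; rewrite inE => /andP[].
have eN : forall u, u \in N -> [set v; u] \in H by move=> u; rewrite inE => /andP[].
have F1 : forall u, u \in N -> v \notin Tc u.
  move=> u uN; rewrite inE negb_and; apply/orP; right; apply/negP => C.
  have : v != v.
    apply: (@cind _ _ (fun z => z != v) u _ _ v C); first exact: nN.
    move=> a b _ /andP[_]; apply: contra => /eqP ->; exact: set22.
  by rewrite eqxx.
have F2 : forall u1 u2, u1 \in N -> u2 \in N -> u1 != u2 -> [disjoint Tc u1 & Tc u2].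
  move=> u1 u2 u1N u2N u12; rewrite -setI_eq0; apply/eqP/setP => z.
  rewrite !inE; apply/negP => /andP[/andP[_ C1] /andP[_ C2]].
  move/negP: (nbr_forest fH u1N u2N u12); apply.
  by apply: connect_trans C1 _; rewrite (sym_connect_sym RvS).
have F3 : forall u, u \in N -> u != q -> Tc u \subset Tcomp st v q.
  move=> u uN uq; apply/subsetP => z; rewrite !inE => /andP[-> C] /=.
  pose Rq := fun a b : T => ([set a; b] \in H) && (q \notin [set a; b]).
  have qv : q != v by apply: nN.
  have h1 : connect Rq v u.
    by apply: connect1; rewrite /Rq eN //= !inE negb_or qv eq_sym uq.
  have : connect Rq u z /\ connect Rv u z.
    apply: (@cind _ _ (fun z => connect Rq u z /\ connect Rv u z) u _ _ z C) => //.
    move=> a b [Ca Cb] ab; split; last exact: connect_trans Cb (@connect1 _ Rv _ _ ab).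
    case: (boolP (q \in [set a; b])) => [|nq].
      rewrite !inE => /orP[] /eqP E; exfalso.
        by move/negP: (nbr_forest fH uN qN uq); apply; rewrite E.
      by move/negP: (nbr_forest fH uN qN uq); apply; rewrite E; exact: connect_trans Cb (@connect1 _ Rv _ _ ab).
    apply: connect_trans Ca (connect1 _); move: ab => /andP[ab _]; by rewrite /Rq ab nq.
  by case => h2 _; exact: connect_trans h1 h2.
have F4 : v \in Tcomp st v q by rewrite inE va connect0.
rewrite /remW -/H -/N.
pose F' u := if (u \in N) && (u != q) then Tc u else set0.
have dis : forall i j, i != j -> [disjoint F' i & F' j].
  move=> i j ij; rewrite /F'.
  case: ifP => [/andP[iN _]|_]; last by rewrite -setI_eq0 set0I.
  case: ifP => [/andP[jN _]|_]; last by rewrite -setI_eq0 setI0.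
  exact: F2.
have sumE : \sum_(u in N | u != q) Wsum st (Tc u) = Wsum st (\bigcup_i F' i).
  rewrite /Wsum (@partition_disjoint_bigcup _ _ _ 0%N addn F' (wt st) dis) big_mkcond /=.
  apply: eq_bigr => u _; rewrite /F'; case: ifP => // _.
  by rewrite big_set0.
have Usub : \bigcup_i F' i \subset Tcomp st v q.
  apply/bigcupsP => i _; rewrite /F'; case: ifP => [/andP[iN iq]|_]; last exact: sub0set.
  exact: F3.
have vU : v \notin \bigcup_i F' i.
  apply/bigcupP => -[i _]; rewrite /F'; case: ifP => [/andP[iN _]|_]; last by rewrite inE.
  by apply/negP; apply: F1.
have le1 : (wt st v + Wsum st (\bigcup_i F' i) <= Wsum st (Tcomp st v q))%N.
  rewrite /Wsum -(big_setU1 (aop := addn) _ vU) /=.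
  have sub : v |: \bigcup_i F' i \subset Tcomp st v q by rewrite subUset sub1set F4 Usub.
  by rewrite [X in (_ <= X)%N](big_setID (v |: \bigcup_i F' i)) /= (setIidPr sub) leq_addr.
have split : (\sum_(u in N) Wsum st (Tcomp st u v) =
   Wsum st (Tc q) + \sum_(u in N | u != q) Wsum st (Tc u))%N.
  by rewrite (bigD1 q qN).
have mx : (Wsum st (Tc q) <= \max_(u in N) Wsum st (Tcomp st u v))%N.
  by rewrite (bigD1 q qN) /= leq_maxl.
rewrite split; rewrite sumE in split *.
move: le1 mx; lia.
Qed.

Unset Implicit Arguments. Set Strict Implicit.

Theorem lemma3 (R : realType) (T : finType) (g : rel T) (id0 : T -> R)
  (g_sym : symmetric g) (g_irr : irreflexive g)
  (g_conn : forall x y : T, connect g x y)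
  (id0_range : forall x, (0 <= id0 x <= 1)%R)
  (id0_inj : injective id0)
  (st : state R T) (Hst : reachable g id0 st) :
  forall v q : T, v \in alive st -> q \in nbr (hedges st) v ->
    (remW st v <= Wsum st (Tcomp st v q))%N.
Proof.
have I : Inv st.
  elim: Hst => [|s1 s2 _ IH stp]; last exact: (@step_inv _ _ g id0 id0_inj s1 s2 IH stp).
  split; first by move=> a b _; rewrite inE.
  move=> a b C.
  have E : a = b.
    apply: (@cind _ _ (fun z => a = z) a _ _ b C) => // x y _.
    by rewrite /rH inE.
  by rewrite E.
move=> v q va qN; exact: final I.1 va qN.
Qed.
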